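(* Let $a,b\ge0$ and let $w\in\tilde S_3$ be the affine Grassmannian element with $\lambda(w)=(2^a1^b)$. Then the number of reduced words of $w$ is $|R(w)|=\binom{\lfloor b/2+a\rfloor}{a}$.
   Context: $\tilde S_3$ is realized as bijections $w:\mathbb Z\to\mathbb Z$ with $w(i+3)=w(i)+3$, $w(1)+w(2)+w(3)=6$, generated by $s_0,s_1,s_2$; $R(w)$ is its set of reduced words. $w$ is affine Grassmannian if $w(1)<w(2)<w(3)$. The code $c(u)=(c_1,c_2,c_3)$, $c_i=\#\{j\in\mathbb Z:j>i,u(j)<u(i)\}$; $\lambda(w)$ is the partition conjugate to the decreasing rearrangement of $c(w^{-1})$; $w\mapsto\lambda(w)$ is a bijection from affine Grassmannian elements to partitions with all parts $<3$. *)

(* Defs.v *)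
From HB Require Import structures.
From mathcomp Require Import all_boot all_order all_algebra.
Set Implicit Arguments. Unset Strict Implicit. Unset Printing Implicit Defensive.
Import Order.TTheory GRing.Theory Num.Theory.

Local Open Scope ring_scope.

Definition is_affine_perm (w : int -> int) : Prop :=
  bijective w /\ (forall i : int, w (i + 3) = w i + 3) /\ w 1 + w 2 + w 3 = 6.

Definition affine_grassmannian (w : int -> int) : Prop := w 1 < w 2 /\ w 2 < w 3.

Definition sgen (i : 'I_3) (j : int) : int :=
  if ((j - (i : nat)%:Z) %% 3)%Z == 0 then j + 1
  else if ((j - (i : nat)%:Z - 1) %% 3)%Z == 0 then j - 1
  else j.

Definition word_prod (s : seq 'I_3) : int -> int :=
  foldr (fun i f => sgen i \o f) id s.

Definition card_is (T : eqType) (P : T -> Prop) (n : nat) : Prop :=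
  exists l : seq T, [/\ uniq l, size l = n & forall x, x \in l <-> P x].

Definition reduced_word (w : int -> int) (s : seq 'I_3) : Prop :=
  (forall z, word_prod s z = w z) /\
  (forall s' : seq 'I_3, (forall z, word_prod s' z = w z) -> (size s <= size s')%N).

Definition code_entry_is (u : int -> int) (i : int) (n : nat) : Prop :=
  card_is (fun j : int => i < j /\ u j < u i) n.

Definition conj_part (p : seq nat) : seq nat :=
  [seq count (fun x => (k < x)%N) p | k <- iota 0 (head 0%N p)].

(* lambda from the code (c1,c2,c3) of w^{-1}: conjugate of its decreasing
   rearrangement (zeros dropped, as partitions). *)
Definition lambda_of_code (c : seq nat) : seq nat :=
  conj_part (filter (fun x => (0 < x)%N) (sort geq c)).

(* Main.v *)
Require Import Defs.
From Stdlib Require Import ZArith Lia.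
From HB Require Import structures.
From mathcomp Require Import all_boot all_order all_algebra.
Import Order.TTheory GRing.Theory Num.Theory.

Section ZW.
Local Open Scope Z_scope.
Definition toZ (x : int) : Z := match x with Posz n => Z.of_nat n | Negz n => - Z.of_nat n - 1 end.
Definition ofZ (z:Z) : int := if (0 <=? z) then Posz (Z.to_nat z) else Negz (Z.to_nat (- z - 1)).

Lemma toZK : cancel toZ ofZ.
Proof. case=> n /=; rewrite /ofZ.
- case: Z.leb_spec => H; [by rewrite Nat2Z.id|lia].
- case: Z.leb_spec => H; [lia|]. congr Negz. lia.
Qed.
Lemma ofZK : cancel ofZ toZ.
Proof. move=> z; rewrite /ofZ; case: Z.leb_spec => H /=; lia. Qed.
Lemma toZ_inj : injective toZ. Proof. exact: can_inj toZK. Qed.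

Lemma toZ_add (x y : int) : toZ (x + y)%R = toZ x + toZ y.
Proof.
case: x => m; case: y => n; rewrite /GRing.add /= /intZmod.addz /=.
- rewrite -plusE; lia.
- case: ltnP => /= H; [move/ssrnat.ltP: H|move/ssrnat.leP: H] => H; rewrite -?minusE /=; lia.
- case: ltnP => /= H; [move/ssrnat.ltP: H|move/ssrnat.leP: H] => H; rewrite -?minusE /=; lia.
- rewrite -plusE; lia.
Qed.
End ZW.

Section ZW2.
Local Open Scope Z_scope.
Lemma toZ_opp (x : int) : toZ (- x)%R = - toZ x.
Proof.
case: x => [[|n]|n] //=; rewrite /GRing.opp /= /intZmod.oppz /=; lia.
Qed.
Lemma toZ_sub (x y : int) : toZ (x - y)%R = toZ x - toZ y.
Proof. rewrite toZ_add toZ_opp; lia. Qed.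
Lemma toZ_nat (n : nat) : toZ (n%:Z) = Z.of_nat n. Proof. by []. Qed.
Lemma toZ_mul (x y : int) : toZ (x * y)%R = toZ x * toZ y.
Proof.
case: x => m; case: y => n; rewrite /GRing.mul /= /intRing.mulz /=;
 rewrite ?toZ_opp /= -?multE; lia.
Qed.
Lemma toZ_lt (x y : int) : (x < y)%R <-> toZ x < toZ y.
Proof.
case: x => m; case: y => n /=; rewrite /Order.lt /= ; split => //= H;
 try (move/ssrnat.ltP: H; lia); try (apply/ssrnat.ltP; lia); lia.
Qed.
Lemma toZ_le (x y : int) : (x <= y)%R <-> toZ x <= toZ y.
Proof.
case: x => m; case: y => n /=; rewrite /Order.le /= ; split => //= H;
 try (move/ssrnat.leP: H; lia); try (apply/ssrnat.leP; lia); lia.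
Qed.
Lemma toZ_mod3 (x : int) : toZ (x %% 3)%Z = Z.modulo (toZ x) 3.
Proof.
have H1 := divz_eq x 3.
have H2 : (0 <= (x %% 3)%Z)%R by apply: modz_ge0.
have H3 : ((x %% 3)%Z < 3)%R by apply: ltz_pmod.
move/toZ_le: H2; move/toZ_lt: H3.
move: H1 => /(congr1 toZ). rewrite toZ_add toZ_mul /=. move=> *. Z.div_mod_to_equations. lia.
Qed.
End ZW2.

Section ZC.
Local Open Scope Z_scope.
Ltac zl := Z.div_mod_to_equations; lia.

Definition sgZ (k v : Z) : Z :=
  if (v - k) mod 3 =? 0 then v + 1 else if (v - k - 1) mod 3 =? 0 then v - 1 else v.
Definition trip := (Z * Z * Z)%type.
Definition stepT (k : 'I_3) (t : trip) : trip :=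
  let '(x, y, z) := t in (sgZ (Z.of_nat k) x, sgZ (Z.of_nat k) y, sgZ (Z.of_nat k) z).
Definition winT (s : seq 'I_3) : trip := foldr stepT (1, 2, 3) s.
Definition Phi (t : trip) : Z :=
  let '(x, y, z) := t in Z.abs ((y - x) / 3) + Z.abs ((z - x) / 3) + Z.abs ((z - y) / 3).
Definition Dst (t : trip) : Prop :=
  let '(x, y, z) := t in (x - y) mod 3 <> 0 /\ (x - z) mod 3 <> 0 /\ (y - z) mod 3 <> 0.

Ltac sgcase := rewrite /sgZ; repeat (case: Z.eqb_spec => ?).

Lemma ordZ (k : 'I_3) : 0 <= Z.of_nat k < 3.
Proof. have := ltn_ord k; move/ssrnat.ltP; lia. Qed.

Lemma Dst_step k t : Dst t -> Dst (stepT k t).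
Proof.
case: t => [[x y] z] /=; have := ordZ k; move: (Z.of_nat k) => K HK.
sgcase; zl.
Qed.

Lemma Phi_step k t : Dst t -> Phi (stepT k t) <= Phi t + 1.
Proof.
case: t => [[x y] z] /=; have := ordZ k; move: (Z.of_nat k) => K HK.
sgcase; zl.
Qed.

Lemma sgZ_invol K v : 0 <= K < 3 -> sgZ K (sgZ K v) = v.
Proof. move=> HK; rewrite {2}/sgZ; case: Z.eqb_spec => ?; [|case: Z.eqb_spec => ?]; sgcase; zl. Qed.

Lemma stepT_invol k t : stepT k (stepT k t) = t.
Proof.
case: t => [[x y] z] /=; have := ordZ k; move: (Z.of_nat k) => K HK.
by rewrite !sgZ_invol.
Qed.

Lemma Dst_win s : Dst (winT s).
Proof. elim: s => [|k s IH] /=; first by zl. by apply: Dst_step. Qed.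

Lemma Phi_win s : Phi (winT s) <= Z.of_nat (size s).
Proof.
elim: s => [|k s IH] /=; first by done.
have := @Phi_step k _ (Dst_win s). rewrite Zpos_P_of_succ_nat; lia.
Qed.

Definition teq (t u : trip) : bool :=
  let '(x, y, z) := t in let '(x', y', z') := u in [&& x =? x', y =? y' & z =? z'].
Lemma teqP t u : reflect (t = u) (teq t u).
Proof.
case: t => [[x y] z]; case: u => [[x' y'] z'] /=.
case: Z.eqb_spec => [->|H]; last by constructor; case.
case: Z.eqb_spec => [->|H]; last by constructor; case.
case: Z.eqb_spec => [->|H]; last by constructor; case.
by constructor.
Qed.

Definition o0 : 'I_3 := @Ordinal 3 0 isT.
Definition o1 : 'I_3 := @Ordinal 3 1 isT.
Definition o2 : 'I_3 := @Ordinal 3 2 isT.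

Fixpoint allw (n : nat) : seq (seq 'I_3) :=
  if n is n'.+1 then
    [seq o0 :: s | s <- allw n'] ++ [seq o1 :: s | s <- allw n'] ++ [seq o2 :: s | s <- allw n']
  else [:: [::]].

Lemma mem_allw n s : (s \in allw n) = (size s == n).
Proof.
elim: n s => [|n IH] [|k s] //=.
  by rewrite !mem_cat; apply/negP; case/or3P => /mapP [? _].
rewrite !mem_cat.
have H : forall j : 'I_3, (k :: s \in [seq j :: s0 | s0 <- allw n]) = (k == j) && (size s == n).
  move=> j; apply/mapP/andP => [[s' Hs' [-> ->]]|[/eqP -> Hs]]; first by rewrite -IH.
  by exists s => //; rewrite IH.
rewrite !H eqSS.
case: (size s == n); rewrite ?andbF ?andbT //.
by clear H; case: k => [[|[|[|]]] Hk].
Qed.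

Lemma mem_cons_map (j k : 'I_3) s l : (k :: s \in [seq j :: s0 | s0 <- l]) = (k == j) && (s \in l).
Proof.
apply/mapP/andP => [[s' Hs' [-> ->]]|[/eqP -> Hs]] //.
by exists s.
Qed.

Lemma uniq_allw n : uniq (allw n).
Proof.
elim: n => [|n IH] //=.
have mi : forall j : 'I_3, injective (fun s : seq 'I_3 => j :: s) by move=> j x y [].
rewrite !cat_uniq !(map_inj_uniq (mi _)) IH /=.
apply/and3P; split.
- by apply/hasPn => s; rewrite mem_cat => /orP [] /mapP [s' _ ->]; rewrite mem_cons_map.
- by apply/hasPn => s /mapP [s' _ ->]; rewrite !mem_cons_map.
- done.
Qed.

Definition cnt (n : nat) (t : trip) : nat := count (fun s => teq (winT s) t) (allw n).

Lemma cnt_rec n t :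
  cnt n.+1 t = (cnt n (stepT o0 t) + cnt n (stepT o1 t) + cnt n (stepT o2 t))%N.
Proof.
rewrite /cnt /= !count_cat !count_map.
have E : forall j : 'I_3, count (preim (fun s => j :: s) (fun s => teq (winT s) t)) (allw n)
   = count (fun s => teq (winT s) (stepT j t)) (allw n).
  move=> j; apply: eq_count => s /=.
  apply/teqP/teqP => [<-|->]; by rewrite stepT_invol.
by rewrite !E addnA.
Qed.

Lemma cnt_zero n t : Z.of_nat n < Phi t -> cnt n t = 0%N.
Proof.
move=> H; rewrite /cnt; apply/eqP; rewrite -leqn0 leqNgt -has_count.
apply/hasP => [[s Hs /teqP Ht]].
move: Hs; rewrite mem_allw => /eqP Hs.
have := Phi_win s; rewrite Ht Hs; lia.
Qed.
End ZC.

Section ZD.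
Local Open Scope Z_scope.
Ltac zl := Z.div_mod_to_equations; lia.
Ltac sgcase := rewrite /sgZ; repeat (case: Z.eqb_spec => ?).
Lemma sgZ_up K v : (v - K) mod 3 = 0 -> sgZ K v = v + 1.
Proof. by rewrite /sgZ => ->. Qed.
Lemma sgZ_dn K v : (v - K - 1) mod 3 = 0 -> sgZ K v = v - 1.
Proof. rewrite /sgZ => H; case: Z.eqb_spec => H'; first by zl. by rewrite H. Qed.
Lemma sgZ_fx K v : (v - K - 2) mod 3 = 0 -> sgZ K v = v.
Proof. rewrite /sgZ => H; case: Z.eqb_spec => H1; first by zl. case: Z.eqb_spec => H2; first by zl. done. Qed.
Ltac sg1 := first [ rewrite sgZ_up; [|zl] | rewrite sgZ_dn; [|zl] | rewrite sgZ_fx; [|zl] ].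
Lemma trip_eq (x y z x' y' z' : Z) : x = x' -> y = y' -> z = z' -> (x, y, z) = (x', y', z').
Proof. by move=> -> -> ->. Qed.
Ltac stept := rewrite /stepT /=; do 3 sg1; apply: trip_eq; lia.

Lemma sum3E (F : trip -> nat) x y z :
  (x - z - 1) mod 3 = 0 -> (y - z - 2) mod 3 = 0 ->
  addn (addn (F (stepT o0 (x, y, z))) (F (stepT o1 (x, y, z)))) (F (stepT o2 (x, y, z))) =
  addn (addn (F (x - 1, y, z + 1)) (F (x + 1, y - 1, z))) (F (x, y + 1, z - 1)).
Proof.
move=> H1 H2.
have : z mod 3 = 0 \/ z mod 3 = 1 \/ z mod 3 = 2 by zl.
case=> [Hz|[Hz|Hz]].
- have -> : stepT o0 (x, y, z) = (x - 1, y, z + 1) by stept.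
  have -> : stepT o1 (x, y, z) = (x + 1, y - 1, z) by stept.
  have -> : stepT o2 (x, y, z) = (x, y + 1, z - 1) by stept.
  done.
- have -> : stepT o1 (x, y, z) = (x - 1, y, z + 1) by stept.
  have -> : stepT o2 (x, y, z) = (x + 1, y - 1, z) by stept.
  have -> : stepT o0 (x, y, z) = (x, y + 1, z - 1) by stept.
  rewrite -!plusE; lia.
- have -> : stepT o2 (x, y, z) = (x - 1, y, z + 1) by stept.
  have -> : stepT o0 (x, y, z) = (x + 1, y - 1, z) by stept.
  have -> : stepT o1 (x, y, z) = (x, y + 1, z - 1) by stept.
  rewrite -!plusE; lia.
Qed.

Lemma sum3O (F : trip -> nat) x y z :
  (x - z - 2) mod 3 = 0 -> (y - z - 1) mod 3 = 0 ->
  addn (addn (F (stepT o0 (x, y, z))) (F (stepT o1 (x, y, z)))) (F (stepT o2 (x, y, z))) =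
  addn (addn (F (x + 1, y, z - 1)) (F (x, y - 1, z + 1))) (F (x - 1, y + 1, z)).
Proof.
move=> H1 H2.
have : x mod 3 = 0 \/ x mod 3 = 1 \/ x mod 3 = 2 by zl.
case=> [Hz|[Hz|Hz]].
- have -> : stepT o0 (x, y, z) = (x + 1, y, z - 1) by stept.
  have -> : stepT o1 (x, y, z) = (x, y - 1, z + 1) by stept.
  have -> : stepT o2 (x, y, z) = (x - 1, y + 1, z) by stept.
  done.
- have -> : stepT o1 (x, y, z) = (x + 1, y, z - 1) by stept.
  have -> : stepT o2 (x, y, z) = (x, y - 1, z + 1) by stept.
  have -> : stepT o0 (x, y, z) = (x - 1, y + 1, z) by stept.
  rewrite -!plusE; lia.
- have -> : stepT o2 (x, y, z) = (x + 1, y, z - 1) by stept.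
  have -> : stepT o0 (x, y, z) = (x, y - 1, z + 1) by stept.
  have -> : stepT o1 (x, y, z) = (x - 1, y + 1, z) by stept.
  rewrite -!plusE; lia.
Qed.

Definition EW (a m : nat) : trip :=
  (1 - 2 * Z.of_nat m - Z.of_nat a, 2 + Z.of_nat m - Z.of_nat a, 3 + Z.of_nat m + 2 * Z.of_nat a).
Definition OW (a m : nat) : trip :=
  (- 2 * Z.of_nat m - Z.of_nat a, 2 + Z.of_nat m - Z.of_nat a, 4 + Z.of_nat m + 2 * Z.of_nat a).

Lemma O_of_E a m : cnt (2 * (a + m)) (EW a m) = 'C(a + m, a) ->
  cnt (2 * (a + m)).+1 (OW a m) = 'C(a + m, a).
Proof.
move=> HE; rewrite cnt_rec /OW sum3O; try zl.
rewrite (@cnt_zero _ (_, _ - 1, _ + 1)); last by rewrite /Phi -?multE -?plusE; zl.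
rewrite (@cnt_zero _ (_ - 1, _ + 1, _)); last by rewrite /Phi -?multE -?plusE; zl.
rewrite !addn0 -HE /EW. congr cnt; apply: trip_eq; lia.
Qed.

Lemma E_cnt n : forall a m, (a + m = n)%N -> cnt (2 * n) (EW a m) = 'C(n, a).
Proof.
elim: n => [|n IH] a m.
  by case: a => [|a] //; case: m.
move=> Ham.
have OI : forall a m, (a + m = n)%N -> cnt (2 * n).+1 (OW a m) = 'C(n, a).
  by move=> a0 m0 H; rewrite -H; apply: O_of_E; rewrite H; apply: IH.
have -> : (2 * n.+1 = (2 * n).+1.+1)%N by rewrite mulnS.
rewrite cnt_rec /EW sum3E; try zl.
have Hn : Z.of_nat n.+1 = Z.of_nat a + Z.of_nat m by rewrite -Ham -plusE; lia.
rewrite (@cnt_zero _ (_ - 1, _, _ + 1)); last by rewrite /Phi -?multE -?plusE; clear -Hn; zl.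
case: a Ham Hn => [|a'] Ham Hn; case: m Ham Hn => [|m'] Ham Hn; first by discriminate Ham.
- rewrite (@cnt_zero _ (_, _ + 1, _ - 1)); last by rewrite /Phi -?multE -?plusE; clear -Hn; zl.
  have -> : (1 - 2 * Z.of_nat m'.+1 - Z.of_nat 0 + 1, 2 + Z.of_nat m'.+1 - Z.of_nat 0 - 1,
     3 + Z.of_nat m'.+1 + 2 * Z.of_nat 0) = OW 0 m' by rewrite /OW; apply: trip_eq; lia.
  rewrite OI; last by rewrite add0n in Ham; case: Ham.
  by rewrite !bin0.
- rewrite (@cnt_zero _ (_ + 1, _ - 1, _)); last by rewrite /Phi -?multE -?plusE; clear -Hn; zl.
  have -> : (1 - 2 * Z.of_nat 0 - Z.of_nat a'.+1, 2 + Z.of_nat 0 - Z.of_nat a'.+1 + 1,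
     3 + Z.of_nat 0 + 2 * Z.of_nat a'.+1 - 1) = OW a' 0 by rewrite /OW; apply: trip_eq; lia.
  have Ha : a' = n by rewrite addn0 in Ham; case: Ham.
  subst a'; rewrite OI ?addn0 // !binn; done.
- have -> : (1 - 2 * Z.of_nat m'.+1 - Z.of_nat a'.+1 + 1, 2 + Z.of_nat m'.+1 - Z.of_nat a'.+1 - 1,
     3 + Z.of_nat m'.+1 + 2 * Z.of_nat a'.+1) = OW a'.+1 m' by rewrite /OW; apply: trip_eq; lia.
  have -> : (1 - 2 * Z.of_nat m'.+1 - Z.of_nat a'.+1, 2 + Z.of_nat m'.+1 - Z.of_nat a'.+1 + 1,
     3 + Z.of_nat m'.+1 + 2 * Z.of_nat a'.+1 - 1) = OW a' m'.+1 by rewrite /OW; apply: trip_eq; lia.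
  rewrite !OI; first by rewrite add0n binS.
  + by rewrite addSn in Ham; case: Ham.
  + by rewrite addnS in Ham; case: Ham.
Qed.
End ZD.

Lemma map_cst (s : seq nat) (c : nat) (f : nat -> nat) :
  (forall x, x \in s -> f x = c) -> map f s = nseq (size s) c.
Proof.
elim: s => [|x s IH] H //=.
rewrite H ?mem_head // IH // => y Hy; apply: H; by rewrite in_cons Hy orbT.
Qed.

Lemma lam_eq (N1 N2 c1 c2 c3 : nat) : (N2 <= N1)%N ->
  perm_eq [:: c1; c2; c3] [:: N1; N2; 0%N] ->
  lambda_of_code [:: c1; c2; c3] = nseq N2 2%N ++ nseq (N1 - N2) 1%N.
Proof.
move=> H12 Hp; rewrite /lambda_of_code.
have -> : sort geq [:: c1; c2; c3] = [:: N1; N2; 0%N].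
  rewrite (perm_sortP _ _ _ _ _ Hp).
  - apply: sorted_sort; first by move=> a b c /= Hab Hbc; apply: leq_trans Hbc Hab.
    by rewrite /= H12.
  - by move=> a b; apply: leq_total.
  - by move=> a b c /= Hab Hbc; apply: leq_trans Hbc Hab.
  - by move=> a b /= /andP [Hab Hba]; apply/eqP; rewrite eqn_leq Hab Hba.
rewrite /conj_part.
clear Hp; case: N2 H12 => [|N2] H12 /=.
  case: N1 H12 => [|N1] H12 //=.
  congr (_ :: _); rewrite -[in RHS](size_iota 1 N1); apply: map_cst.
  move=> k; rewrite mem_iota => /andP [_ Hk].
  by rewrite add1n in Hk; rewrite Hk.
have -> : (0 < N1)%N by apply: leq_trans H12.
rewrite /= -cat_cons.
have -> : iota 0 N1 = iota 0 N2.+1 ++ iota N2.+1 (N1 - N2.+1) by rewrite -iotaD subnKC.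
rewrite map_cat.
have -> : 2%N :: nseq N2 2%N = nseq N2.+1 2%N by [].
congr (_ ++ _).
- rewrite -[in RHS](size_iota 0 N2.+1); apply: map_cst.
  move=> k; rewrite mem_iota => /andP [_ Hk] /=.
  by rewrite Hk (leq_trans Hk H12).
- rewrite -[in RHS](size_iota N2.+1 (N1 - N2.+1)); apply: map_cst.
  move=> k; rewrite mem_iota => /andP [Hk1 Hk2] /=.
  rewrite (subnKC H12) in Hk2.
  by rewrite Hk2 ltnNge Hk1.
Qed.

Section ZF.
Local Open Scope Z_scope.
Ltac zl := Z.div_mod_to_equations; lia.

Lemma per_closed (h : Z -> Z) : (forall v, h (v + 3) = h v + 3) ->
  forall v, h v = h (1 + (v - 1) mod 3) + 3 * ((v - 1) / 3).
Proof.
move=> Hp.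
have up : forall (n : nat) r, h (r + 3 * Z.of_nat n) = h r + 3 * Z.of_nat n.
  elim=> [|n IH] r; first by rewrite /= !Z.add_0_r.
  rewrite Nat2Z.inj_succ.
  have -> : r + 3 * Z.succ (Z.of_nat n) = (r + 3 * Z.of_nat n) + 3 by lia.
  rewrite Hp IH; lia.
move=> v.
have Hv : v = (1 + (v - 1) mod 3) + 3 * ((v - 1) / 3) by zl.
move: ((v - 1) / 3) Hv => q Hv.
case: (Z.le_gt_cases 0 q) => Hq.
- have Hq' : q = Z.of_nat (Z.to_nat q) by lia.
  rewrite {1}Hv Hq' up; lia.
- have Hq' : q = - Z.of_nat (Z.to_nat (- q)) by lia.
  set r := 1 + (v - 1) mod 3.
  have := up (Z.to_nat (- q)) v.
  have -> : v + 3 * Z.of_nat (Z.to_nat (- q)) = r by lia.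
  lia.
Qed.

Lemma fcl (h : Z -> Z) : (forall v, h (v + 3) = h v + 3) -> forall v,
  (v mod 3 = 1 /\ h v = h 1 + v - 1) \/ (v mod 3 = 2 /\ h v = h 2 + v - 2) \/
  (v mod 3 = 0 /\ h v = h 3 + v - 3).
Proof.
move=> Hp v; rewrite (@per_closed h Hp v).
have : (v - 1) mod 3 = 0 \/ (v - 1) mod 3 = 1 \/ (v - 1) mod 3 = 2 by zl.
case=> [H|[H|H]]; rewrite H.
- rewrite (_ : 1 + 0 = 1) //; left; split; zl.
- rewrite (_ : 1 + 1 = 2) //; right; left; split; zl.
- rewrite (_ : 1 + 2 = 3) //; right; right; split; zl.
Qed.

Lemma f_per (w : int -> int) : (forall i : int, w (i + 3)%R = (w i + 3)%R) ->
  forall v, toZ (w (ofZ (v + 3))) = toZ (w (ofZ v)) + 3.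
Proof.
move=> Hw v.
have -> : ofZ (v + 3) = (ofZ v + 3)%R by apply: toZ_inj; rewrite toZ_add !ofZK.
by rewrite Hw toZ_add.
Qed.

Definition wv (s : seq 'I_3) (v : Z) : Z := foldr (fun (k : 'I_3) u => sgZ (Z.of_nat k) u) v s.

Lemma eq0Z (u : int) : (u == 0%R) = (toZ u =? 0).
Proof.
case: eqP => [->|H]; first by [].
case: Z.eqb_spec => // H'; exfalso; apply: H; apply: toZ_inj; rewrite H'; done.
Qed.

Lemma toZ_sgen (i : 'I_3) (j : int) : toZ (sgen i j) = sgZ (Z.of_nat i) (toZ j).
Proof.
rewrite /sgen /sgZ !eq0Z !toZ_mod3 !toZ_sub toZ_nat.
case: (_ =? 0); first by rewrite toZ_add.
case: (_ =? 0); first by rewrite toZ_sub.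
done.
Qed.

Lemma toZ_wp (s : seq 'I_3) (j : int) : toZ (word_prod s j) = wv s (toZ j).
Proof. elim: s => [|k s IH] //=. by rewrite toZ_sgen IH. Qed.

Lemma winT_wv s : winT s = (wv s 1, wv s 2, wv s 3).
Proof. by elim: s => [|k s IH] //=; rewrite IH. Qed.

Lemma sgZ_per K v : sgZ K (v + 3) = sgZ K v + 3.
Proof.
rewrite /sgZ.
have -> : (v + 3 - K) mod 3 = (v - K) mod 3 by zl.
have -> : (v + 3 - K - 1) mod 3 = (v - K - 1) mod 3 by zl.
by case: (_ =? 0); [lia|case: (_ =? 0); lia].
Qed.

Lemma wv_per s v : wv s (v + 3) = wv s v + 3.
Proof. elim: s => [|k s IH] //=. by rewrite IH sgZ_per. Qed.

Lemma prod_iff (w : int -> int) (s : seq 'I_3) :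
  (forall i : int, w (i + 3)%R = (w i + 3)%R) ->
  (forall z, word_prod s z = w z) <->
  winT s = (toZ (w 1%R), toZ (w 2%R), toZ (w 3%R)).
Proof.
move=> Hw; rewrite winT_wv; split.
- move=> H.
  have e : forall j, toZ (w j) = wv s (toZ j) by move=> j; rewrite -toZ_wp H.
  by rewrite !e.
- move=> [H1 H2 H3] z; apply: toZ_inj.
  rewrite toZ_wp.
  have Hf := @f_per w Hw.
  have E : forall v, wv s v = toZ (w (ofZ v)).
    move=> v.
    case: (@fcl (wv s) (wv_per s) v) => [[Hv ->]|[[Hv ->]|[Hv ->]]];
    case: (@fcl _ Hf v) => [[Hv' ->]|[[Hv' ->]|[Hv' ->]]]; try lia.
    + by rewrite H1.
    + by rewrite H2.
    + by rewrite H3.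
  by rewrite E toZK.
Qed.
End ZF.

Section ZG.
Local Open Scope Z_scope.
Ltac zl := Z.div_mod_to_equations; lia.

Definition ap (c : Z) (A : nat) : seq int := [seq ofZ (c - 3 * Z.of_nat t) | t <- iota 1 A].

Lemma mem_ap q c A : q \in ap c A <-> (c - toZ q) mod 3 = 0 /\ 3 <= c - toZ q <= 3 * Z.of_nat A.
Proof.
split.
- move/mapP => [t]; rewrite mem_iota => /andP [/ssrnat.leP H1 /ssrnat.leP H2] ->.
  rewrite ofZK -plusE in H2 *; zl.
- move=> [H1 H2]; apply/mapP; exists (Z.to_nat ((c - toZ q) / 3)).
  + rewrite mem_iota; apply/andP; split; apply/ssrnat.leP; rewrite -?plusE; zl.
  + apply: toZ_inj; rewrite ofZK; zl.
Qed.

Lemma uniq_ap c A : uniq (ap c A).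
Proof.
rewrite map_inj_in_uniq ?iota_uniq // => t t' _ _ /(congr1 toZ); rewrite !ofZK => H.
apply: Nat2Z.inj; lia.
Qed.

Lemma size_ap c A : size (ap c A) = A.
Proof. by rewrite size_map size_iota. Qed.

Definition NN (X Y Z p : Z) : nat :=
  if p mod 3 =? 1 then (Z.to_nat ((Y - X) / 3) + Z.to_nat ((Z - X) / 3))%N
  else if p mod 3 =? 2 then Z.to_nat ((Z - Y) / 3) else 0%N.

Definition Qp (X Y Z p : Z) : seq int :=
  if p mod 3 =? 1 then ap (p + 1) (Z.to_nat ((Y - X) / 3)) ++ ap (p + 2) (Z.to_nat ((Z - X) / 3))
  else if p mod 3 =? 2 then ap (p + 1) (Z.to_nat ((Z - Y) / 3)) else [::].

Lemma size_Qp X Y Z p : size (Qp X Y Z p) = NN X Y Z p.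
Proof.
rewrite /Qp /NN; case: (_ =? 1); first by rewrite size_cat !size_ap.
by case: (_ =? 2); rewrite ?size_ap.
Qed.

Lemma uniq_Qp X Y Z p : uniq (Qp X Y Z p).
Proof.
rewrite /Qp; case: Z.eqb_spec => Hp.
- rewrite cat_uniq !uniq_ap andbT /=; apply/hasPn => q /mem_ap H; apply/negP => /mem_ap H'.
  zl.
- by case: (_ =? 2); rewrite ?uniq_ap.
Qed.

Lemma mem_Qp (h : Z -> Z) p q : (forall v, h (v + 3) = h v + 3) ->
  h 1 < h 2 < h 3 ->
  (h 2 - h 1) mod 3 <> 0 -> (h 3 - h 1) mod 3 <> 0 -> (h 3 - h 2) mod 3 <> 0 ->
  q \in Qp (h 1) (h 2) (h 3) p <-> toZ q < p /\ h p < h (toZ q).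
Proof.
move=> Hp Hlt D1 D2 D3.
case: (@fcl h Hp p) => [[Hr Hhp]|[[Hr Hhp]|[Hr Hhp]]];
case: (@fcl h Hp (toZ q)) => [[Hr' Hhq]|[[Hr' Hhq]|[Hr' Hhq]]];
rewrite /Qp Hr /= ?mem_cat; rewrite Hhp Hhq;
move: (h 1) (h 2) (h 3) Hlt Hhp Hhq D1 D2 D3 => X Y Z Hlt Hhp Hhq D1 D2 D3; clear Hhp Hhq;
(split;
 [ move=> Hm; first [ case/orP: Hm => /mem_ap Hm; zl | move/mem_ap: Hm => Hm; zl | by rewrite in_nil in Hm ]
 | move=> H; first [ apply/orP; left; apply/mem_ap; zl | apply/orP; right; apply/mem_ap; zl
                  | apply/mem_ap; zl | exfalso; zl ] ]).
Qed.
End ZG.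

Section ZH.
Local Open Scope Z_scope.
Ltac zl := Z.div_mod_to_equations; lia.

Definition fw (w : int -> int) (v : Z) : Z := toZ (w (ofZ v)).

Lemma code_val (w winv : int -> int) (i : int) (c : nat) :
  injective w -> cancel w winv -> cancel winv w ->
  (forall i : int, w (i + 3)%R = (w i + 3)%R) ->
  fw w 1 < fw w 2 < fw w 3 ->
  (fw w 2 - fw w 1) mod 3 <> 0 -> (fw w 3 - fw w 1) mod 3 <> 0 -> (fw w 3 - fw w 2) mod 3 <> 0 ->
  code_entry_is winv i c ->
  c = NN (fw w 1) (fw w 2) (fw w 3) (toZ (winv i)).
Proof.
move=> Hinj Hc1 Hc2 Hw Hlt D1 D2 D3 [l [Hu Hs Hm]].
set p := toZ (winv i).
have Hper : forall v, fw w (v + 3) = fw w v + 3 by apply: f_per.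
set lz := map w (Qp (fw w 1) (fw w 2) (fw w 3) p).
have Hlz : forall j, j \in lz <-> (i < j)%R /\ (winv j < winv i)%R.
  move=> j; rewrite -{1}(Hc2 j) /lz (mem_map Hinj) (@mem_Qp (fw w) p (winv j) Hper Hlt D1 D2 D3).
  rewrite /fw /p !toZK !Hc2 !toZ_lt; tauto.
have P : perm_eq l lz.
  apply: uniq_perm => //; first by rewrite (map_inj_uniq Hinj) uniq_Qp.
  by move=> j; apply/idP/idP => H; [apply/Hlz/Hm | apply/Hm/Hlz].
by rewrite -Hs (perm_size P) size_map size_Qp.
Qed.
End ZH.

Section ZI.
Local Open Scope Z_scope.
Ltac zl := Z.div_mod_to_equations; lia.

Lemma fin_count (w : int -> int) (T : trip) (L N : nat) :
  (forall s, (forall z, word_prod s z = w z) <-> winT s = T) ->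
  Phi T = Z.of_nat L -> cnt L T = N -> (0 < N)%N -> card_is (reduced_word w) N.
Proof.
move=> Hiff HP Hc HN.
exists [seq s <- allw L | teq (winT s) T]; split.
- by rewrite filter_uniq // uniq_allw.
- by rewrite size_filter.
- move=> s; rewrite mem_filter mem_allw; split.
  + move=> /andP [/teqP HT /eqP HL]; split; first by apply/Hiff.
    move=> s' /Hiff HT'.
    have := Phi_win s'; rewrite HT' HP HL => H; apply/ssrnat.leP; lia.
  + move=> [Hprod Hmin].
    have HT : winT s = T by apply/Hiff.
    rewrite HT /=; apply/andP; split; first by apply/teqP.
    move: HN; rewrite -Hc /cnt -has_count => /hasP [s0 Hs0 /teqP HT0].
    have H1 := Hmin s0 (proj2 (Hiff s0) HT0).
    move: Hs0; rewrite mem_allw => /eqP Hs0.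
    have := Phi_win s; rewrite HT HP => H2.
    rewrite Hs0 in H1; move/ssrnat.leP: H1 => H1.
    apply/eqP; lia.
Qed.

Lemma permg (g : Z -> nat) r1 r2 r3 :
  0 <= r1 < 3 -> 0 <= r2 < 3 -> 0 <= r3 < 3 -> r1 <> r2 -> r1 <> r3 -> r2 <> r3 ->
  perm_eq [:: g r1; g r2; g r3] [:: g 1; g 2; g 0].
Proof.
move=> H1 H2 H3 H12 H13 H23.
move: H12 H13 H23.
have : (r1 = 0 \/ r1 = 1 \/ r1 = 2) /\ (r2 = 0 \/ r2 = 1 \/ r2 = 2) /\ (r3 = 0 \/ r3 = 1 \/ r3 = 2) by lia.
case=> [[->|[->|->]] [[->|[->|->]] [->|[->|->]]]] H12 H13 H23; try (exfalso; lia);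
apply/permP => P /=; rewrite -!plusE; lia.
Qed.
End ZI.

Section ZJ.
Local Open Scope Z_scope.
Ltac zl := Z.div_mod_to_equations; lia.

Lemma NN_mod (X Y W p : Z) : NN X Y W p = NN X Y W (p mod 3).
Proof. by rewrite /NN Zmod_mod. Qed.

Lemma main_aux (a b : nat) (w winv : int -> int) (c1 c2 c3 : nat) :
  is_affine_perm w ->
  affine_grassmannian w ->
  cancel w winv -> cancel winv w ->
  code_entry_is winv 1%R c1 -> code_entry_is winv 2%R c2 -> code_entry_is winv 3%R c3 ->
  lambda_of_code [:: c1; c2; c3] = nseq a 2%N ++ nseq b 1%N ->
  card_is (reduced_word w) 'C(a + b./2, a).
Proof.
move=> [Hbij [Hw Hsum]] [G1 G2] Hc1 Hc2 K1 K2 K3 Hlam.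
have Hinj := bij_inj Hbij.
have E1 : fw w 1 = toZ (w 1%R) by [].
have E2 : fw w 2 = toZ (w 2%R) by [].
have E3 : fw w 3 = toZ (w 3%R) by [].
have Hper : forall v, (fw w (v + 3) = fw w v + 3) by apply: f_per.
have finj : forall u v, fw w u = fw w v -> u = v.
  move=> u v /toZ_inj /Hinj /(congr1 toZ); by rewrite !ofZK.
have Hlt : (fw w 1 < fw w 2 < fw w 3).
  by rewrite E1 E2 E3; split; apply/toZ_lt.
have Hs6 : (fw w 1 + fw w 2 + fw w 3 = 6).
  by rewrite E1 E2 E3 -!toZ_add Hsum.
have Hsh : forall u t, (fw w (u + 3 * t) = fw w u + 3 * t).
  move=> u t.
  case: (@fcl _ Hper u) => [[Hu Hfu]|[[Hu Hfu]|[Hu Hfu]]];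
  case: (@fcl _ Hper (u + 3 * t)) => [[Hx Hfx]|[[Hx Hfx]|[Hx Hfx]]]; zl.
have Dij : forall u v, (u - v) mod 3 <> 0 -> (fw w u - fw w v) mod 3 <> 0.
  move=> u v Huv Hf; apply: Huv.
  have := finj (u + 3 * ((fw w v - fw w u) / 3)) v; rewrite Hsh => H.
  have {}H := H ltac:(zl); zl.
have D1 : (fw w 2 - fw w 1) mod 3 <> 0 by apply: Dij.
have D2 : (fw w 3 - fw w 1) mod 3 <> 0 by apply: Dij.
have D3 : (fw w 3 - fw w 2) mod 3 <> 0 by apply: Dij.
have C1 := @code_val w winv _ _ Hinj Hc1 Hc2 Hw Hlt D1 D2 D3 K1.
have C2 := @code_val w winv _ _ Hinj Hc1 Hc2 Hw Hlt D1 D2 D3 K2.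
have C3 := @code_val w winv _ _ Hinj Hc1 Hc2 Hw Hlt D1 D2 D3 K3.
have Rd : forall u v, (u - v) mod 3 = 0 -> (fw w u - fw w v) mod 3 = 0.
  move=> u v H; have E : u = v + 3 * ((u - v) / 3) by zl.
  rewrite E Hsh; zl.
have F1 : fw w (toZ (winv 1%R)) = 1 by rewrite /fw toZK Hc2.
have F2 : fw w (toZ (winv 2%R)) = 2 by rewrite /fw toZK Hc2.
have F3 : fw w (toZ (winv 3%R)) = 3 by rewrite /fw toZK Hc2.
have R12 : toZ (winv 1%R) mod 3 <> toZ (winv 2%R) mod 3.
  move=> H; have := Rd (toZ (winv 1%R)) (toZ (winv 2%R)) ltac:(zl); rewrite F1 F2; done.
have R13 : toZ (winv 1%R) mod 3 <> toZ (winv 3%R) mod 3.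
  move=> H; have := Rd (toZ (winv 1%R)) (toZ (winv 3%R)) ltac:(zl); rewrite F1 F3; done.
have R23 : toZ (winv 2%R) mod 3 <> toZ (winv 3%R) mod 3.
  move=> H; have := Rd (toZ (winv 2%R)) (toZ (winv 3%R)) ltac:(zl); rewrite F2 F3; done.
set g := NN (fw w 1) (fw w 2) (fw w 3).
have Hperm : perm_eq [:: c1; c2; c3] [:: g 1; g 2; g 0].
  rewrite C1 C2 C3 (NN_mod _ _ _ (toZ (winv 1%R))) (NN_mod _ _ _ (toZ (winv 2%R)))
    (NN_mod _ _ _ (toZ (winv 3%R))).
  apply: permg => //; zl.
set A1 := Z.to_nat ((fw w 2 - fw w 1) / 3).
set A2 := Z.to_nat ((fw w 3 - fw w 1) / 3).
set A3 := Z.to_nat ((fw w 3 - fw w 2) / 3).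
have g1 : g 1 = (A1 + A2)%N by [].
have g2 : g 2 = A3 by [].
have g0 : g 0 = 0%N by [].
rewrite g1 g2 g0 in Hperm.
have Hle : (A3 <= A1 + A2)%N by apply/ssrnat.leP; rewrite -plusE /A1 /A2 /A3; zl.
rewrite (@lam_eq _ _ _ _ _ Hle Hperm) in Hlam.
have ha : a = A3.
  have := congr1 (count (pred1 2%N)) Hlam.
  by rewrite !count_cat !count_nseq /= !mul1n !mul0n !addn0.
have hb : b = (A1 + A2 - A3)%N.
  have := congr1 (count (pred1 1%N)) Hlam.
  by rewrite !count_cat !count_nseq /= !mul1n !mul0n !add0n.
have Za : Z.of_nat a = (fw w 3 - fw w 2) / 3 by rewrite ha /A3; zl.
have Zb : Z.of_nat b = (fw w 2 - fw w 1) / 3 + (fw w 3 - fw w 1) / 3 - (fw w 3 - fw w 2) / 3.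
  rewrite hb -minusE -plusE /A1 /A2 /A3; zl.
have Hb := odd_double_half b.
set m := b./2 in Hb *.
have Zm : Z.of_nat b = Z.of_nat (odd b) + 2 * Z.of_nat m.
  rewrite -{1}Hb -plusE -!mul2n -multE; lia.
case: (odd b) Zm => Zm.
-
  have {}Zm : Z.of_nat b = 1 + 2 * Z.of_nat m by rewrite Zm.
  apply: (@fin_count w (OW a m) (2 * (a + m)).+1).
  + move=> s; rewrite prod_iff // -E1 -E2 -E3.
    have -> : (fw w 1, fw w 2, fw w 3) = OW a m by rewrite /OW; apply: trip_eq; clear -Za Zb Zm Hlt Hs6 D1 D2 D3; zl.
    done.
  + rewrite /Phi /OW -multE -plusE; clear; zl.
  + by apply: O_of_E; apply: E_cnt.
  + by rewrite bin_gt0 leq_addr.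
- have {}Zm : Z.of_nat b = 2 * Z.of_nat m by rewrite Zm.
  apply: (@fin_count w (EW a m) (2 * (a + m))).
  + move=> s; rewrite prod_iff // -E1 -E2 -E3.
    have -> : (fw w 1, fw w 2, fw w 3) = EW a m by rewrite /EW; apply: trip_eq; clear -Za Zb Zm Hlt Hs6 D1 D2 D3; zl.
    done.
  + rewrite /Phi /EW -multE -plusE; clear; zl.
  + by apply: E_cnt.
  + by rewrite bin_gt0 leq_addr.
Qed.
End ZJ.

Local Open Scope ring_scope.

Theorem proposition3p6 (a b : nat) (w winv : int -> int) (c1 c2 c3 : nat) :
  is_affine_perm w ->
  affine_grassmannian w ->
  cancel w winv -> cancel winv w ->
  code_entry_is winv 1 c1 -> code_entry_is winv 2 c2 -> code_entry_is winv 3 c3 ->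
  lambda_of_code [:: c1; c2; c3] = nseq a 2%N ++ nseq b 1%N ->
  card_is (reduced_word w) 'C(a + b./2, a).
Proof. exact: main_aux. Qed.
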